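(* Let $x$ be a sequence of length $n$, let $i\in\{1,\ldots,n-1\}$ and $y=\tau(x,i)$. Define $r=\overleftarrow{b_x}$ if $x[i]<x[i+1]$ and $\overleftarrow{b_x}>1$; $r=\overleftarrow{a_x}+1$ if $x[i]>x[i+1]$ and $\overleftarrow{a_x}>0$; and $r=n-i+1$ otherwise. Define $\ell=\overrightarrow{a_x}$ if $x[i]<x[i+1]$ and $\overrightarrow{a_x}>0$; $\ell=\overrightarrow{b_x}-1$ if $x[i]>x[i+1]$ and $\overrightarrow{b_x}>1$; and $\ell=i$ otherwise. Then $\overrightarrow{PD}_x[k]=\overrightarrow{PD}_y[k]$ for all $k\in\{i+r,\ldots,n\}$, and $\overleftarrow{PD}_x[k]=\overleftarrow{PD}_y[k]$ for all $k\in\{1,\ldots,i-\ell\}$.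
   Context: Sequences are finite sequences of pairwise distinct integers indexed from $1$. For $1\le i\le n-1$, $\tau(x,i)$ is obtained from $x$ by exchanging $x[i]$ and $x[i+1]$. The parent-distance table of $x$ is $\overrightarrow{PD}_x[k]=k-\max\{j<k : x[j]<x[k]\}$ if such $j$ exists and $0$ otherwise; the reverse parent-distance table is $\overleftarrow{PD}_x[k]=\min\{j : k<j\le n,\ x[j]<x[k]\}-k$ if such $j$ exists and $0$ otherwise. Notation: $\overrightarrow{a_x}=\overrightarrow{PD}_x[i]$, $\overrightarrow{b_x}=\overrightarrow{PD}_x[i+1]$, $\overleftarrow{a_x}=\overleftarrow{PD}_x[i+1]$, $\overleftarrow{b_x}=\overleftarrow{PD}_x[i]$. Index ranges $\{a,\ldots,b\}$ with $a>b$ are empty. *)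

(* Defs.v *)
From mathcomp Require Import all_boot all_order all_algebra.
Set Implicit Arguments. Unset Strict Implicit. Unset Printing Implicit Defensive.
Import Order.TTheory GRing.Theory Num.Theory.

(* Sequences: x : seq int, pairwise distinct (uniq x), indexed from 1:
   x[k] := nth 0 x (k-1) for 1 <= k <= size x. *)
Definition at1 (x : seq int) (k : nat) : int := nth 0%R x k.-1.

Definition tau (x : seq int) (i : nat) : seq int :=
  [seq (if k == i then at1 x i.+1 else if k == i.+1 then at1 x i else at1 x k)
  | k <- iota 1 (size x)].

Definition fPD (x : seq int) (k : nat) : nat :=
  if has (fun j => (at1 x j < at1 x k)%R) (iota 1 k.-1)
  then k - \max_(1 <= j < k | (at1 x j < at1 x k)%R) j
  else 0.

Definition rPD (x : seq int) (k : nat) : nat :=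
  let js := [seq j <- iota k.+1 (size x - k) | (at1 x j < at1 x k)%R] in
  if js is j :: _ then j - k else 0.

(* Main.v *)
Require Import Defs.
From mathcomp Require Import all_boot all_order all_algebra zify.
Import Order.TTheory GRing.Theory Num.Theory.

Definition G (P : nat -> bool) k : nat :=
  if has P (iota 1 k.-1) then k - \max_(1 <= j < k | P j) j else 0.

Lemma fPDE x k : fPD x k = G (fun j => (at1 x j < at1 x k)%R) k.
Proof. by []. Qed.

Lemma G_ext (P1 P2 : nat -> bool) k : (forall j, 1 <= j < k -> P1 j = P2 j) -> G P1 k = G P2 k.
Proof.
move=> E; rewrite /G.
have -> : has P1 (iota 1 k.-1) = has P2 (iota 1 k.-1).
  apply: eq_in_has => j; rewrite mem_iota => /andP[a b]; apply: E; lia.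
case: ifP => // _; congr (_ - _); exact: congr_big_nat.
Qed.

Lemma max_suffix (P : nat -> bool) a c b m :
  a <= c -> c <= m < b -> P m ->
  \max_(a <= j < b | P j) j = \max_(c <= j < b | P j) j.
Proof.
move=> ac /andP[cm mb] Pm.
rewrite (@big_cat_nat _ _ _ c a b) //; last by lia.
apply/maxn_idPr.
have h1 : \max_(a <= j < c | P j) j <= c.-1.
  apply/bigmax_leqP_seq => j; rewrite mem_index_iota => ? _; lia.
have h2 : m <= \max_(c <= j < b | P j) j.
  by apply: (leq_bigmax_seq m) => //; rewrite mem_index_iota; lia.
apply: (leq_trans h1); apply: leq_trans h2; lia.
Qed.

Lemma G_suffix (P1 P2 : nat -> bool) c k m : 1 <= c -> c <= m < k -> P1 m ->
  (forall j, c <= j < k -> P1 j = P2 j) -> G P1 k = G P2 k.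
Proof.
move=> c1 cmk Pm E; rewrite /G.
have P2m : P2 m by rewrite -E.
have hm : m \in iota 1 k.-1 by rewrite mem_iota; lia.
rewrite (introT hasP (ex_intro2 _ _ m hm Pm)) (introT hasP (ex_intro2 _ _ m hm P2m)).
rewrite (@max_suffix P1 1 c k m c1 cmk Pm) (@max_suffix P2 1 c k m c1 cmk P2m).
congr (_ - _); exact: congr_big_nat.
Qed.

Lemma G_attain (P : nat -> bool) k : has P (iota 1 k.-1) ->
  P (\max_(1 <= j < k | P j) j) /\ 1 <= \max_(1 <= j < k | P j) j < k.
Proof.
case/hasP=> m; rewrite mem_iota => hm Pm.
have : m <= \max_(1 <= j < k | P j) j.
  by apply: (leq_bigmax_seq m) => //; rewrite mem_index_iota; lia.
have : \max_(1 <= j < k | P j) j = 0 \/ (P (\max_(1 <= j < k | P j) j) /\ 1 <= \max_(1 <= j < k | P j) j < k).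
  rewrite big_seq_cond; elim/big_ind: _ => [|u v|j].
  - by left.
  - move=> hu hv; have key : forall K : nat -> Prop, K u -> K v -> K (maxn u v) by move=> K; case: (leqP u v).
    exact: (key (fun w => w = 0 \/ P w /\ 0 < w < k)).
  - rewrite mem_index_iota => /andP[a b]; right; split => //.
case=> [->|//]; lia.
Qed.

Definition H (Q : nat -> bool) k n : nat :=
  if [seq j <- iota k.+1 (n - k) | Q j] is j :: _ then j - k else 0.

Lemma rPDE x k : rPD x k = H (fun j => (at1 x j < at1 x k)%R) k (size x).
Proof. by []. Qed.

Lemma H_ext (Q1 Q2 : nat -> bool) k n :
  (forall j, k < j <= n -> Q1 j = Q2 j) -> H Q1 k n = H Q2 k n.
Proof.
move=> E; rewrite /H.
have -> // : [seq j <- iota k.+1 (n - k) | Q1 j] = [seq j <- iota k.+1 (n - k) | Q2 j].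
apply: eq_in_filter => j; rewrite mem_iota => ?; apply: E; lia.
Qed.

Lemma H_prefix (Q1 Q2 : nat -> bool) k n c m :
  k < m < c -> c <= n -> Q1 m ->
  (forall j, k < j < c -> Q1 j = Q2 j) -> H Q1 k n = H Q2 k n.
Proof.
move=> hm cn Qm E; rewrite /H.
have -> : n - k = (c - k.+1) + (n - c).+1 by lia.
rewrite iotaD !filter_cat.
have -> : [seq j <- iota k.+1 (c - k.+1) | Q2 j] = [seq j <- iota k.+1 (c - k.+1) | Q1 j].
  apply: eq_in_filter => j; rewrite mem_iota => ?; symmetry; apply: E; lia.
have : has Q1 (iota k.+1 (c - k.+1)).
  by apply/hasP; exists m => //; rewrite mem_iota; lia.
by rewrite has_filter; case: [seq j <- iota k.+1 (c - k.+1) | Q1 j].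
Qed.

Lemma size_tau x i : size (tau x i) = size x.
Proof. by rewrite size_map size_iota. Qed.

Lemma at1_tau x i k : 1 <= k <= size x ->
  at1 (tau x i) k = at1 x (if k == i then i.+1 else if k == i.+1 then i else k).
Proof.
move=> hk; rewrite /at1 /tau (nth_map 0%N); last by rewrite size_iota; lia.
rewrite nth_iota; last by lia.
have -> : 1 + k.-1 = k by lia.
by case: (k == i); case: (k == i.+1).
Qed.

Lemma fPD_wit x k : 0 < fPD x k ->
  exists j, 1 <= j < k /\ (at1 x j < at1 x k)%R /\ fPD x k = k - j.
Proof.
rewrite fPDE /G; case: ifP => [hh _|]; last by [].
have [h1 h2] := @G_attain (fun j => (at1 x j < at1 x k)%R) k hh.
by eexists; split; [exact: h2|split; [exact: h1|]].
Qed.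

Lemma rPD_wit x k : 0 < rPD x k ->
  exists j, k < j <= size x /\ (at1 x j < at1 x k)%R /\ rPD x k = j - k.
Proof.
rewrite /rPD; case E: [seq j <- iota k.+1 (size x - k) | (at1 x j < at1 x k)%R] => [//|j t] _.
have : j \in [seq j <- iota k.+1 (size x - k) | (at1 x j < at1 x k)%R] by rewrite E inE eqxx.
rewrite mem_filter mem_iota => /andP[hj hr]; exists j; split; [lia|by []].
Qed.

Lemma fwd_core x i k : 1 <= i -> i.+2 <= k <= size x ->
  ((at1 x i < at1 x k)%R = (at1 x i.+1 < at1 x k)%R \/
   exists m, i.+2 <= m < k /\ (at1 x m < at1 x k)%R) ->
  fPD x k = fPD (tau x i) k.
Proof.
move=> i1 hk cond; rewrite !fPDE.
have -> : at1 (tau x i) k = at1 x k.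
  rewrite at1_tau; last by lia.
  have -> : (k == i) = false by apply/eqP; lia.
  by have -> : (k == i.+1) = false by apply/eqP; lia.
case: cond => [E|[m [hm Pm]]].
- apply: G_ext => j hj; rewrite at1_tau; last by lia.
  case: eqP => [->|_]; first by rewrite E.
  case: eqP => [->|_]; first by rewrite E.
  done.
- apply: (@G_suffix _ _ i.+2 k m) => //.
  move=> j hj; rewrite at1_tau; last by lia.
  have -> : (j == i) = false by apply/eqP; lia.
  by have -> : (j == i.+1) = false by apply/eqP; lia.
Qed.

Lemma rev_core x i k : 1 <= k < i -> i < size x ->
  ((at1 x i < at1 x k)%R = (at1 x i.+1 < at1 x k)%R \/
   exists m, k < m < i /\ (at1 x m < at1 x k)%R) ->
  rPD x k = rPD (tau x i) k.
Proof.
move=> hk hi cond; rewrite !rPDE size_tau.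
have -> : at1 (tau x i) k = at1 x k.
  rewrite at1_tau; last by lia.
  have -> : (k == i) = false by apply/eqP; lia.
  by have -> : (k == i.+1) = false by apply/eqP; lia.
case: cond => [E|[m [hm Pm]]].
- apply: H_ext => j hj; rewrite at1_tau; last by lia.
  case: eqP => [->|_]; first by rewrite E.
  case: eqP => [->|_]; first by rewrite E.
  done.
- apply: (@H_prefix _ _ k (size x) i m) => //; first by lia.
  move=> j hj; rewrite at1_tau; last by lia.
  have -> : (j == i) = false by apply/eqP; lia.
  by have -> : (j == i.+1) = false by apply/eqP; lia.
Qed.

Theorem lemma4 (x : seq int) (i : nat) :
  uniq x -> 1 <= i <= (size x).-1 ->
  let n := size x in
  let y := tau x i in
  let ra := rPD x i.+1 in (* <-a_x *)
  let rb := rPD x i in    (* <-b_x *)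
  let fa := fPD x i in    (* ->a_x *)
  let fb := fPD x i.+1 in (* ->b_x *)
  let r := if (at1 x i < at1 x i.+1)%R && (1 < rb) then rb
           else if (at1 x i.+1 < at1 x i)%R && (0 < ra) then ra.+1
           else n - i + 1 in
  let l := if (at1 x i < at1 x i.+1)%R && (0 < fa) then fa
           else if (at1 x i.+1 < at1 x i)%R && (1 < fb) then fb - 1
           else i in
  (forall k, i + r <= k <= n -> fPD x k = fPD y k) /\
  (forall k, 1 <= k <= i - l -> rPD x k = rPD y k).
Proof.
move=> _ hi; cbv zeta; split.
- move=> k; case: ifP => [/andP[ab rb1]|_].
    have [j [hj [xj E]]] := rPD_wit x i (ltnW rb1); rewrite E in rb1 *.
    move=> hk; apply: fwd_core; try lia.
    case Pi: (at1 x i < at1 x k)%R.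
      right; exists j; split; last exact: lt_trans xj Pi.
      have : j != k by apply/eqP => ejk; move: (lt_trans xj Pi); rewrite ejk ltxx.
      move/eqP; lia.
    left; symmetry; apply/negbTE; rewrite -leNgt; apply: ltW.
    by apply: (le_lt_trans _ ab); rewrite leNgt Pi.
  case: ifP => [/andP[ba ra0]|_]; last by lia.
  have [j [hj [xj ->]]] := rPD_wit x i.+1 ra0.
  move=> hk; apply: fwd_core; try lia.
  case Pi: (at1 x i.+1 < at1 x k)%R.
    right; exists j; split; last exact: lt_trans xj Pi.
    have : j != k by apply/eqP => ejk; move: (lt_trans xj Pi); rewrite ejk ltxx.
    move/eqP; lia.
  left; apply/negbTE; rewrite -leNgt; apply: ltW.
  by apply: (le_lt_trans _ ba); rewrite leNgt Pi.
- move=> k; case: ifP => [/andP[ab fa0]|_].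
    have [j [hj [xj ->]]] := fPD_wit x i fa0.
    move=> hk; apply: rev_core; try lia.
    case Pi: (at1 x i < at1 x k)%R.
      right; exists j; split; last exact: lt_trans xj Pi.
      have : j != k by apply/eqP => ejk; move: (lt_trans xj Pi); rewrite ejk ltxx.
      move/eqP; lia.
    left; symmetry; apply/negbTE; rewrite -leNgt; apply: ltW.
    by apply: (le_lt_trans _ ab); rewrite leNgt Pi.
  case: ifP => [/andP[ba fb1]|_]; last by lia.
  have [j [hj [xj E]]] := fPD_wit x i.+1 (ltnW fb1); rewrite E in fb1 *.
  move=> hk; apply: rev_core; try lia.
  case Pi: (at1 x i.+1 < at1 x k)%R.
    right; exists j; split; last exact: lt_trans xj Pi.
    have : j != k by apply/eqP => ejk; move: (lt_trans xj Pi); rewrite ejk ltxx.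
    move/eqP; lia.
  left; apply/negbTE; rewrite -leNgt; apply: ltW.
  by apply: (le_lt_trans _ ba); rewrite leNgt Pi.
Qed.
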